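(* Let $M$ be a simply laced spherical Coxeter diagram, $B$ a set of mutually orthogonal positive roots, $\beta,\gamma\in B$ and $j$ a node of $M$. Then: (i) there is no node $i$ with $(\alpha_i,\beta)=1$, $(\alpha_i,\gamma)=-1$ and $\mathrm{ht}(\beta)=\mathrm{ht}(\gamma)+1$; (ii) if $(\alpha_j,\beta)=-1$, $(\alpha_j,\gamma)=1$ and $\mathrm{ht}(\gamma)=\mathrm{ht}(\beta)+2$, then there is no node $i$ with $\alpha_i\in B^\perp$ and $i\sim j$.
   Context: $M$ has nodes $1,\dots,n$; for distinct nodes, $i\sim j$ means they are joined by an edge. $\Phi^+$ is the set of positive roots of the root system of type $M$, with fundamental roots $\alpha_i$ and inner product normalized by $(\alpha_i,\alpha_i)=2$, $(\alpha_i,\alpha_j)=-1$ if $i\sim j$, $0$ otherwise. The height of $\beta=\sum_k a_k\alpha_k$ is $\mathrm{ht}(\beta)=\sum_k a_k$. $B^\perp$ is the set of roots orthogonal to every element of $B$. *)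

(* Defs.v *)
From HB Require Import structures.
From mathcomp Require Import all_boot all_order all_algebra.
Set Implicit Arguments. Unset Strict Implicit. Unset Printing Implicit Defensive.
Import Order.TTheory GRing.Theory Num.Theory.
Local Open Scope ring_scope.

(* A simply laced Coxeter diagram on nodes 'I_n (= {0,...,n-1}) is a simple
   graph given by a symmetric irreflexive relation [e]; [e i j] means i ~ j. *)
Definition simple_graph (n : nat) (e : rel 'I_n) : Prop :=
  symmetric e /\ irreflexive e.

(* Vectors in the root lattice, written in the basis of fundamental roots. *)
Notation vec n := {ffun 'I_n -> int}.

Definition gram (n : nat) (e : rel 'I_n) (i j : 'I_n) : int :=
  if i == j then 2 else if e i j then -1 else 0.

Definition ip (n : nat) (e : rel 'I_n) (x y : vec n) : int :=
  \sum_(i < n) \sum_(j < n) x i * gram e i j * y j.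

(* Spherical: the Coxeter group is finite, i.e. (Tits) the symmetric bilinear
   form is positive definite. *)
Definition spherical (n : nat) (e : rel 'I_n) : Prop :=
  forall x : vec n, x != 0 -> 0 < ip e x x.

Definition alpha (n : nat) (i : 'I_n) : vec n := [ffun k => ((k == i) : nat)%:Z].

Definition srefl (n : nat) (e : rel 'I_n) (i : 'I_n) (v : vec n) : vec n :=
  [ffun k => v k - ip e v (alpha i) * alpha i k].

Inductive is_root (n : nat) (e : rel 'I_n) : vec n -> Prop :=
| root_alpha (i : 'I_n) : is_root e (alpha i)
| root_refl (i : 'I_n) (v : vec n) : is_root e v -> is_root e (srefl e i v).

Definition pos_root (n : nat) (e : rel 'I_n) (v : vec n) : Prop :=
  is_root e v /\ forall k, 0 <= v k.

Definition ht (n : nat) (v : vec n) : int := \sum_(k < n) v k.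

Definition orth_pos_roots (n : nat) (e : rel 'I_n) (B : vec n -> Prop) : Prop :=
  (forall b, B b -> pos_root e b) /\
  (forall b c, B b -> B c -> b <> c -> ip e b c = 0).

Definition in_perp (n : nat) (e : rel 'I_n) (B : vec n -> Prop) (v : vec n) : Prop :=
  is_root e v /\ forall b, B b -> ip e v b = 0.

(* Main.v *)
Require Import Defs.
From HB Require Import structures.
From mathcomp Require Import all_boot all_order all_algebra.
From mathcomp Require Import zify ring.
Import Order.TTheory GRing.Theory Num.Theory.
Set Implicit Arguments. Unset Strict Implicit.
Local Open Scope ring_scope.

Definition ipf (n : nat) (e : rel 'I_n) (x y : 'I_n -> int) : int :=
  \sum_(i < n) \sum_(j < n) x i * gram e i j * y j.
Definition addf (n : nat) (x y : 'I_n -> int) := fun k => x k + y k.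
Definition oppf (n : nat) (x : 'I_n -> int) := fun k => - x k.
Definition sclf (n : nat) (c : int) (x : 'I_n -> int) := fun k => c * x k.

Section H.
Variables (n : nat) (e : rel 'I_n).
Hypothesis He : simple_graph e.

Lemma ipf_ext (x x' y y' : 'I_n -> int) : x =1 x' -> y =1 y' ->
  ipf e x y = ipf e x' y'.
Proof.
move=> hx hy; apply: eq_bigr => i _; apply: eq_bigr => j _.
by rewrite hx hy.
Qed.

Lemma ipfDl x y z : ipf e (addf x y) z = ipf e x z + ipf e y z.
Proof.
rewrite /ipf -big_split; apply: eq_bigr => i _; rewrite -big_split.
by apply: eq_bigr => j _; rewrite /addf !mulrDl.
Qed.

Lemma ipfNl x z : ipf e (oppf x) z = - ipf e x z.
Proof.
rewrite /ipf -sumrN; apply: eq_bigr => i _; rewrite -sumrN.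
by apply: eq_bigr => j _; rewrite /oppf !mulNr.
Qed.

Lemma ipfZl c x z : ipf e (sclf c x) z = c * ipf e x z.
Proof.
rewrite /ipf mulr_sumr; apply: eq_bigr => i _; rewrite mulr_sumr.
by apply: eq_bigr => j _; rewrite /sclf !mulrA.
Qed.

Lemma gram_sym i j : gram e i j = gram e j i.
Proof.
case: He => hs _; rewrite /gram eq_sym (hs i j) //.
Qed.

Lemma ipf_sym x y : ipf e x y = ipf e y x.
Proof.
rewrite /ipf exchange_big; apply: eq_bigr => i _; apply: eq_bigr => j _.
by rewrite (gram_sym j i); ring.
Qed.

Lemma ipfDr x y z : ipf e z (addf x y) = ipf e z x + ipf e z y.
Proof. by rewrite ipf_sym ipfDl !(ipf_sym x) (ipf_sym y). Qed.
Lemma ipfNr x z : ipf e z (oppf x) = - ipf e z x.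
Proof. by rewrite ipf_sym ipfNl ipf_sym. Qed.
Lemma ipfZr c x z : ipf e z (sclf c x) = c * ipf e z x.
Proof. by rewrite ipf_sym ipfZl ipf_sym. Qed.

Lemma ipf_alphal i y : ipf e (alpha i) y = \sum_(j < n) gram e i j * y j.
Proof.
rewrite /ipf (bigD1 i) //= [X in _ + X]big1 => [|k nk].
  by rewrite addr0; apply: eq_bigr => j _; rewrite /alpha ffunE eqxx mul1r.
by rewrite big1 // => j _; rewrite /alpha ffunE (negbTE nk) !mul0r.
Qed.

Lemma ipf_alpha2 i j : ipf e (alpha i) (alpha j) = gram e i j.
Proof.
rewrite ipf_alphal (bigD1 j) //= [X in _ + X]big1 => [|k nk].
  by rewrite /alpha ffunE eqxx mulr1 addr0.
by rewrite /alpha ffunE (negbTE nk) mulr0.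
Qed.

Lemma sum_alpha i : \sum_(k < n) alpha i k = 1.
Proof.
rewrite (bigD1 i) //= [X in _ + X]big1 => [|k nk].
  by rewrite /alpha ffunE eqxx addr0.
by rewrite /alpha ffunE (negbTE nk).
Qed.

Lemma ipf_even x : exists m, ipf e x x = 2 * m.
Proof.
pose a i j := x i * gram e i j * x j.
have asym i j : a i j = a j i by rewrite /a (gram_sym j i); ring.
have hs i j : a i j = (if (val i < val j)%N then a i j else 0)
   + (if (val j < val i)%N then a i j else 0)
   + (if val i == val j then a i j else 0).
  case: (ltngtP (val i) (val j)) => h.
  - by rewrite !addr0.
  - by rewrite add0r addr0.
  - by rewrite !add0r.
exists (\sum_(i < n) \sum_(j < n) (if (val i < val j)%N then a i j else 0)
        + \sum_(i < n) x i * x i).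
have -> : ipf e x x = \sum_(i < n) \sum_(j < n) a i j by [].
under eq_bigr => i _ do under eq_bigr => j _ do rewrite hs.
under eq_bigr => i _ do rewrite big_split /= big_split /=.
rewrite big_split /= big_split /=.
have -> : \sum_(i < n) \sum_(j < n) (if (val j < val i)%N then a i j else 0)
   = \sum_(i < n) \sum_(j < n) (if (val i < val j)%N then a i j else 0).
  rewrite exchange_big; apply: eq_bigr => i _; apply: eq_bigr => j _.
  by rewrite asym.
have -> : \sum_(i < n) \sum_(j < n) (if val i == val j then a i j else 0)
   = \sum_(i < n) 2 * (x i * x i).
  apply: eq_bigr => i _; rewrite (bigD1 i) //= eqxx [X in _ + X]big1 => [|k nk].
    rewrite addr0 /a /gram eqxx; ring.
  by rewrite ifF //; apply/negbTE; rewrite eq_sym.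
rewrite -mulr_sumr; set S := \sum_(i < n) \sum_(j < n) _; ring.
Qed.


Hypothesis Hsph : spherical e.

Lemma ipf_pos p : (exists k, p k != 0) -> 2 <= ipf e p p.
Proof.
case=> k pk.
have h : 0 < ipf e p p.
  have := Hsph (x := [ffun k => p k]) _.
  have -> : ip e [ffun k => p k] [ffun k => p k] = ipf e p p.
    by apply: ipf_ext => t; rewrite ffunE.
  apply; apply/eqP => h0; move: pk; have := congr1 (fun f : {ffun 'I_n -> int} => f k) h0.
  by rewrite !ffunE => ->; rewrite eqxx.
have [m hm] := ipf_even p.
move: h; rewrite hm; lia.
Qed.

Lemma key v : ipf e v v = 2 -> \sum_(k < n) v k = 0 -> False.
Proof.
move=> hv hs.
pose p k := if 0 <= v k then v k else 0.
pose q k := if 0 <= v k then 0 else - v k.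
have hp k : 0 <= p k by rewrite /p; case: ifP => // h; lia.
have hq k : 0 <= q k by rewrite /q; case: ifP => // h; lia.
have hvpq : ipf e v v = ipf e (addf p (oppf q)) (addf p (oppf q)).
  by apply: ipf_ext => k; rewrite /addf /oppf /p /q; case: ifP => _; lia.
rewrite ipfDl !ipfDr !ipfNl !ipfNr opprK (ipf_sym q p) in hvpq.
have hpq : ipf e p q <= 0.
  apply: sumr_le0 => i _; apply: sumr_le0 => j _.
  rewrite /gram; case: eqP => [<-|ne].
    by rewrite /p /q; case: ifP => _; lia.
  have := hp i; have := hq j; case: (e i j) => ? ?; nia.
have hsum : \sum_(k < n) p k = \sum_(k < n) q k.
  have : \sum_(k < n) (p k - q k) = \sum_(k < n) v k.
    by apply: eq_bigr => k _; rewrite /p /q; case: ifP => _; lia.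
  by rewrite sumrB hs => /eqP; rewrite subr_eq0 => /eqP.
have nz : exists k, v k != 0.
  apply/existsP; apply: contraT; rewrite negb_exists => /forallP h0.
  move: hv; rewrite /ipf big1 // => i _; rewrite big1 // => j _.
  by move: (h0 i); rewrite negbK => /eqP ->; rewrite !mul0r.
have allz (f : 'I_n -> int) : (forall k, 0 <= f k) -> \sum_(k < n) f k = 0 ->
    forall k, f k = 0.
  by move=> hf h0 k; apply: (psumr_eq0P (P := predT) _ h0).
have [k hk] := nz.
have hP : exists k, p k != 0.
  apply/existsP; apply: contraT; rewrite negb_exists => /forallP h0.
  have h0' k' : p k' = 0 by apply/eqP; move: (h0 k'); rewrite negbK.
  have sq : \sum_(k < n) q k = 0 by rewrite -hsum big1.
  move: hk (h0' k) (allz q hq sq k); rewrite /p /q; case: ifP => _; lia.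
have hQ : exists k, q k != 0.
  apply/existsP; apply: contraT; rewrite negb_exists => /forallP h0.
  have h0' k' : q k' = 0 by apply/eqP; move: (h0 k'); rewrite negbK.
  have sq : \sum_(k < n) p k = 0 by rewrite hsum big1.
  move: hk (h0' k) (allz p hp sq k); rewrite /p /q; case: ifP => _; lia.
have := ipf_pos hP; have := ipf_pos hQ; lia.
Qed.

End H.

Lemma root_norm (n : nat) (e : rel 'I_n) (He : simple_graph e) v :
  is_root e v -> ipf e v v = 2.
Proof.
elim=> [i|i w _ IH].
  by rewrite ipf_alpha2 /gram eqxx.
pose c := ipf e w (alpha i).
have -> : ipf e (srefl e i w) (srefl e i w) =
   ipf e (addf w (oppf (sclf c (alpha i)))) (addf w (oppf (sclf c (alpha i)))).
  by apply: ipf_ext => k; rewrite /srefl ffunE.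
rewrite ipfDl !(ipfDr He) !ipfNl !(ipfNr He) !ipfZl !(ipfZr He) ipf_alpha2 /gram eqxx.
rewrite (ipf_sym He (alpha i) w) -/c IH; ring.
Qed.

Theorem proposition2p1 (n : nat) (e : rel 'I_n)
  (He : simple_graph e) (Hsph : spherical e)
  (B : vec n -> Prop) (HB : orth_pos_roots e B)
  (beta gamma : vec n) (Hbeta : B beta) (Hgamma : B gamma) (j : 'I_n) :
  (~ exists i : 'I_n,
       [/\ ip e (alpha i) beta = 1, ip e (alpha i) gamma = -1
         & ht beta = ht gamma + 1]) /\
  (ip e (alpha j) beta = -1 -> ip e (alpha j) gamma = 1 ->
   ht gamma = ht beta + 2 ->
   ~ exists i : 'I_n, in_perp e B (alpha i) /\ e i j).
Proof.
case: HB => Hpos Horth.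
have nb : ipf e beta beta = 2 by apply: root_norm => //; case: (Hpos _ Hbeta).
have ng : ipf e gamma gamma = 2 by apply: root_norm => //; case: (Hpos _ Hgamma).
have sa i : \sum_(k < n) alpha i k = 1 by apply: sum_alpha.
split.
  case=> i [h1 h2 h3].
  have ne : beta <> gamma by move=> eq; move: h1 h2; rewrite eq => ->.
  have bg : ipf e beta gamma = 0 := Horth _ _ Hbeta Hgamma ne.
  have h1' : ipf e (alpha i) beta = 1 := h1.
  have h2' : ipf e (alpha i) gamma = -1 := h2.
  have naa : ipf e (alpha i) (alpha i) = 2 by rewrite ipf_alpha2 /gram eqxx.
  apply: (@key n e He Hsph (addf (addf beta (oppf gamma)) (oppf (alpha i)))).
    rewrite !ipfDl !(ipfDr He) !ipfNl !(ipfNr He) ?(ipfDr He) ?(ipfNr He).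
    rewrite (ipf_sym He gamma beta) (ipf_sym He beta (alpha i))
      (ipf_sym He gamma (alpha i)).
    lia.
  rewrite /addf /oppf !big_split /= !sumrN sa.
  move: h3; rewrite /ht; move=> ->; ring.
move=> h1 h2 h3 [i [[_ Hp] eij]].
have ne : beta <> gamma by move=> eq; move: h1 h2; rewrite eq => ->.
have bg : ipf e beta gamma = 0 := Horth _ _ Hbeta Hgamma ne.
have h1' : ipf e (alpha j) beta = -1 := h1.
have h2' : ipf e (alpha j) gamma = 1 := h2.
have h4 : ipf e (alpha i) beta = 0 := Hp _ Hbeta.
have h5 : ipf e (alpha i) gamma = 0 := Hp _ Hgamma.
have nij : i != j by apply: contraTneq eij => ->; case: He => _ ->.
have naa : ipf e (alpha i) (alpha i) = 2 by rewrite ipf_alpha2 /gram eqxx.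
have nbb : ipf e (alpha j) (alpha j) = 2 by rewrite ipf_alpha2 /gram eqxx.
have nab : ipf e (alpha i) (alpha j) = -1 by rewrite ipf_alpha2 /gram (negbTE nij) eij.
apply: (@key n e He Hsph
  (addf (addf (addf gamma (oppf beta)) (oppf (alpha i))) (oppf (alpha j)))).
  rewrite !ipfDl !(ipfDr He) !ipfNl !(ipfNr He) ?(ipfDr He) ?(ipfNr He).
  have := ipf_sym He beta gamma; have := ipf_sym He beta (alpha i);
  have := ipf_sym He gamma (alpha i); have := ipf_sym He beta (alpha j);
  have := ipf_sym He gamma (alpha j); have := ipf_sym He (alpha j) (alpha i).
  lia.
rewrite /addf /oppf !big_split /= !sumrN !sa.
move: h3; rewrite /ht => ->; ring.
Qed.
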